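(* Let $\gamma > 0$. Suppose $G$ is a graph on $n$ vertices such that $d(x) + d(y) \geq (1+2\gamma) n$ for all pairs of distinct non-adjacent vertices $x, y \in V(G)$. Let $d_1 \leq \dots \leq d_n$ be the degree sequence of $G$. Then for all $i < n/2$, $$d_i \geq i + \gamma n \quad \text{or} \quad d_{n-i-\gamma n} \geq n - i.$$
   Context: Floors and ceilings are omitted where they do not affect the argument (e.g. $\gamma n$ is treated as an integer). *)

(* Defs.v *)
From mathcomp Require Import all_boot all_order all_algebra.
From mathcomp Require Import reals.
Set Implicit Arguments. Unset Strict Implicit. Unset Printing Implicit Defensive.

(* A finite simple graph is a symmetric irreflexive relation e on a finType T;
   the vertex set is T, so n = #|T|. *)

Definition deg (T : finType) (e : rel T) (x : T) : nat := #|[set y | e x y]|.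

Definition degseq (T : finType) (e : rel T) : seq nat :=
  sort leq [seq deg e x | x <- enum T].

(* d_j, 1-indexed: d e j = the j-th smallest degree (1 <= j <= #|T|) *)
Definition dseq (T : finType) (e : rel T) (j : nat) : nat :=
  nth 0 (degseq e) j.-1.

(* Main.v *)
Require Import Defs.
From mathcomp Require Import all_boot all_order all_algebra.
From mathcomp Require Import reals.
From mathcomp Require Import zify.
Import Order.TTheory GRing.Theory Num.Theory.

Section S.
Variables (T : finType) (e : rel T).

Lemma count_deg (P : pred nat) : count P (degseq e) = #|[set v | P (deg e v)]|.
Proof.
rewrite /degseq.
have -> : count P (sort leq [seq deg e x | x <- enum T]) = count P [seq deg e x | x <- enum T].
  by apply/permP; rewrite perm_sort.
rewrite -sum1_count big_map -sum1dep_card.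
rewrite big_enum_cond; apply: eq_bigl => v; by rewrite inE.
Qed.

Lemma size_degseq : size (degseq e) = #|T|.
Proof. by rewrite /degseq size_sort size_map cardE. Qed.

Lemma cnt_lt p c : (1 <= p <= #|T|)%N -> (dseq e p < c)%N ->
  (p <= #|[set v | deg e v < c]|)%N.
Proof.
move=> /andP[p1 pn] hc.
rewrite -(count_deg (fun d => d < c)).
have sz := size_degseq.
have so : sorted leq (degseq e) by apply: sort_sorted; exact: leq_total.
rewrite -(cat_take_drop p (degseq e)) count_cat.
have : count (fun d => d < c) (take p (degseq e)) = p.
  have : all (fun d => d < c) (take p (degseq e)).
    have st : size (take p (degseq e)) = p by rewrite size_takel // sz.
    apply/(all_nthP 0) => q; rewrite st => hq; rewrite nth_take //.
    apply: leq_ltn_trans hc; rewrite /dseq.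
    apply: (sorted_leq_nth leq_trans leqnn) => //; rewrite ?inE /= ?sz; lia.
  by rewrite all_count => /eqP ->; rewrite size_takel // sz.
move=> ->; exact: leq_addr.
Qed.

Lemma dseq_mem p : (1 <= p <= #|T|)%N -> exists x, dseq e p = deg e x.
Proof.
move=> /andP[p1 pn].
have : dseq e p \in degseq e by apply: mem_nth; rewrite size_degseq; lia.
rewrite /degseq (perm_mem (permEl (perm_sort _ _))) => /mapP[x _ ->]; by exists x.
Qed.

Hypothesis irr : irreflexive e.
Hypothesis sym : symmetric e.

Definition na (c w : T) := (c != w) && ~~ e c w.

Lemma card_na c : (deg e c + #|[set w | na c w]|).+1 = #|T|.
Proof.
have h1 := cardsC [set y | e c y].
have h2 := cardsD1 c (~: [set y | e c y]).
have -> : [set w | na c w] = ~: [set y | e c y] :\ c.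
  by apply/setP => w; rewrite !inE /na eq_sym.
rewrite !inE irr /= in h2.
rewrite /deg; lia.
Qed.

Lemma sum_bool (A : {set T}) (P : pred T) :
  \sum_(w in A) (P w : nat) = #|[set w in A | P w]|.
Proof.
rewrite -sum1dep_card big_mkcondr; apply: eq_bigr => w _; by case: (P w).
Qed.

Lemma card_le_compl (A B : {set T}) : B \subset ~: A -> (#|A| + #|B| <= #|T|)%N.
Proof.
move=> /subset_leq_card h; have := cardsC A; lia.
Qed.

End S.


Local Open Scope ring_scope.

Theorem lemma2p2 (R : realType) (gamma : R) (T : finType) (e : rel T) (k : nat) :
  symmetric e -> irreflexive e ->
  0 < gamma ->
  (* gamma * n is treated as an integer k (floors omitted, as in the paper) *)
  gamma * (#|T|%:R) = k%:R ->
  (forall x y : T, x != y -> ~~ e x y ->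
     (1 + 2 * gamma) * (#|T|%:R) <= (deg e x + deg e y)%:R) ->
  forall i : nat, (1 <= i)%N -> (i.*2 < #|T|)%N ->
  (* the index n - i - gamma n of the second alternative is a valid index *)
  (i + k < #|T|)%N ->
  (i%:R + gamma * (#|T|%:R) <= (dseq e i)%:R :> R)
  \/ (#|T| - i <= dseq e (#|T| - i - k))%N.
Proof.
move=> sym irr _ hk H i i1 i2 ik.
have H' : forall x y, x != y -> ~~ e x y -> (#|T| + 2 * k <= deg e x + deg e y)%N.
  move=> x y xy nxy; have := H x y xy nxy.
  by rewrite mulrDl mul1r -mulrA hk -natrM -natrD ler_nat.
rewrite hk -natrD ler_nat.
set n := #|T| in i2 ik H' *.
set j := (n - i - k)%N.
have j1 : (1 <= j <= n)%N by rewrite /j; lia.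
have nasym : forall a b, @na T e a b = @na T e b a.
  by move=> a b; rewrite /na eq_sym sym.
case: (leqP n (2 * i + 2 * k + 1)) => hn.
  right; case: (leqP (n - i) (dseq e j)) => // hlt; exfalso.
  set C := [set v | (deg e v < n - i)%N].
  have hC : (j <= #|C|)%N by apply: cnt_lt.
  set W := [set w | 2 * k + i + 1 <= deg e w]%N.
  have hCW : (#|C| + #|W| <= n)%N.
    apply: card_le_compl; apply/subsetP => w; rewrite !inE; lia.
  have lo : forall c, c \in C -> (i <= \sum_(w in W) (@na T e c w : nat))%N.
    move=> c; rewrite inE => hc; rewrite sum_bool.
    have -> : [set w in W | @na T e c w] = [set w | @na T e c w].
      apply/setP => w; rewrite !inE; case hw: (@na T e c w); rewrite ?andbF //.
      move: hw; rewrite /na => /andP[cw ncw]; have := H' c w cw ncw; lia.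
    have := @card_na T e irr c; lia.
  have up : forall w, w \in W -> (\sum_(c in C) (@na T e c w : nat) <= n - 1 - (2 * k + i + 1))%N.
    move=> w; rewrite inE => hw; rewrite sum_bool.
    have : (#|[set c in C | @na T e c w]| <= #|[set c | @na T e w c]|)%N.
      by apply: subset_leq_card; apply/subsetP => c; rewrite !inE nasym => /andP[].
    have := @card_na T e irr w; lia.
  have L : (#|C| * i <= \sum_(c in C) \sum_(w in W) (@na T e c w : nat))%N.
    rewrite -sum_nat_const; exact: leq_sum.
  have U : (\sum_(c in C) \sum_(w in W) (@na T e c w : nat) <= #|W| * (n - 1 - (2 * k + i + 1)))%N.
    rewrite exchange_big -sum_nat_const; exact: leq_sum.
  have := leq_trans L U; nia.
case: (leqP (i + k) (dseq e i)) => hi; [by left | right].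
case: (leqP (n - i) (dseq e j)) => // hlt; exfalso.
have [x hx] : exists x, dseq e i = deg e x by apply: dseq_mem; lia.
set Lo := [set v | (deg e v < n - i)%N].
have hLo : (j <= #|Lo|)%N by apply: cnt_lt.
have hN : (#|Lo| + #|[set w | @na T e x w]| <= n)%N.
  apply: card_le_compl; apply/subsetP => w; rewrite !inE /na => /andP[xw nxw].
  have := H' x w xw nxw; lia.
have := @card_na T e irr x; lia.
Qed.
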